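(* Let $g_1,g_2$ be monic divisors of $x^m-1$ over $\mathbb{F}_q$, $v_1\in\mathcal{R}$, and let $\mathcal{D}_1$ be the QC code of length $2m$ generated by $(g_1,v_1g_1)$ and $(0,g_2)$. Then $\mathcal{D}_1$ is symplectic dual-containing iff $g_2\mid g_2^{\perp}(\overline{v_1}-v_1)$ and $g_2\mid g_1^{\perp}$.
   Context: $\mathcal{R}=\mathbb{F}_q[x]/(x^m-1)$, elements identified with representatives of degree $<m$; $[k]=(k_0,\dots,k_{m-1})$; $\overline{k}(x)=k(x^{-1})\bmod(x^m-1)$; $f^*(x)=x^{\deg f}f(1/x)$; for $k\in\mathcal{R}$, $f=\frac{x^m-1}{\gcd(k,x^m-1)}$, $k^{\perp}=f(0)^{-1}f^*$. ''$g\mid a$'' for $g\mid x^m-1$ means $g$ divides the representative of $a$. The QC code generated by $(u_{i1},u_{i2})$, $i=1,2$, is $\{([r_1u_{11}+r_2u_{21}],[r_1u_{12}+r_2u_{22}]):r_i\in\mathcal{R}\}\subseteq\mathbb{F}_q^{2m}$. Symplectic inner product on $\mathbb{F}_q^{2m}$: $\sum_{i=1}^m(u_iv_{m+i}-u_{m+i}v_i)$; dual-containing means $\mathcal{D}_1^{\perp_S}\subseteq\mathcal{D}_1$. *)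

(* Defs.v *)
From HB Require Import structures.
From mathcomp Require Import all_boot all_order all_algebra.
Set Implicit Arguments. Unset Strict Implicit. Unset Printing Implicit Defensive.
Import GRing.Theory.
Local Open Scope ring_scope.

Section QC.
Variables (F : finFieldType) (m : nat).

Definition xm1 : {poly F} := 'X^m - 1.
(* canonical representative (degree < m) of an element of R = F[x]/(x^m-1) *)
Definition red (p : {poly F}) : {poly F} := p %% xm1.
(* kbar(x) = k(x^{-1}) mod (x^m-1); in R, x^{-1} = x^{m-1} *)
Definition cyc_conj (k : {poly F}) : {poly F} := red (red k \Po 'X^(m.-1)).
Definition recip (f : {poly F}) : {poly F} :=
  \poly_(i < size f) f`_((size f).-1 - i).
Definition cyc_perp (k : {poly F}) : {poly F} :=
  let f := xm1 %/ gcdp (red k) xm1 in (f`_0)^-1 *: recip f.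
Definition rdiv (g a : {poly F}) : bool := g %| red a.
Definition cvec (k : {poly F}) : 'rV[F]_m := \row_(i < m) (red k)`_i.
Definition qc_code (u11 u12 u21 u22 : {poly F}) : 'rV[F]_(m + m) -> Prop :=
  fun w => exists r1 r2 : {poly F},
    w = row_mx (cvec (r1 * u11 + r2 * u21)) (cvec (r1 * u12 + r2 * u22)).
Definition symp (u v : 'rV[F]_(m + m)) : F :=
  \sum_(i < m) (u 0 (lshift m i) * v 0 (rshift m i)
                - u 0 (rshift m i) * v 0 (lshift m i)).
Definition symp_dual_containing (D : 'rV[F]_(m + m) -> Prop) : Prop :=
  forall v, (forall u, D u -> symp u v = 0) -> D v.
End QC.

(* Main.v *)
Require Import Defs.
From HB Require Import structures.
From mathcomp Require Import all_boot all_order all_algebra.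
From mathcomp Require Import ring zify.
Set Implicit Arguments. Unset Strict Implicit. Unset Printing Implicit Defensive.
Import GRing.Theory.
Local Open Scope ring_scope.

Section Aux.
Variables (F : finFieldType) (m : nat).
Hypothesis Hm : (0 < m)%N.
Local Notation X1 := (xm1 F m).
Implicit Types a b d p r z w : {poly F}.

Lemma X1_neq0 : X1 != 0.
Proof. by rewrite -size_poly_eq0 /xm1 size_XnsubC. Qed.

Lemma size_X1 : size X1 = m.+1.
Proof. by rewrite /xm1 size_XnsubC. Qed.

Lemma dvdp_big (d : {poly F}) n (G : 'I_n -> {poly F}) :
  (forall i, d %| G i) -> d %| \sum_(i < n) G i.
Proof.
move=> H; apply: (big_ind (fun x => d %| x)).
- by rewrite dvdp0.
- by move=> x y; apply: dvdp_add.
- by move=> i _; apply: H.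
Qed.

Lemma X1_XX i j : X1 %| 'X^(i + j * m) - 'X^i.
Proof.
have -> : ('X^(i + j * m) : {poly F}) - 'X^i = 'X^i * ('X^m ^+ j - 1 ^+ j).
  by rewrite expr1n exprD mulnC exprM; ring.
by apply: dvdp_mull; rewrite subrXX dvdp_mulIl.
Qed.

Lemma red_small (p : {poly F}) : (size p <= m)%N -> red m p = p.
Proof. by move=> Hs; rewrite /red modp_small // size_X1 ltnS. Qed.

Lemma size_red (p : {poly F}) : (size (red m p) <= m)%N.
Proof. by rewrite -ltnS -size_X1 ltn_modp X1_neq0. Qed.

Lemma red_cong (a b : {poly F}) : (red m a == red m b) = (X1 %| a - b).
Proof.
rewrite -subr_eq0 /red -modpN -modpD.
by apply/idP/idP => [/eqP/modp_eq0P|/modp_eq0P ->].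
Qed.

Lemma dvdp_red_sub (a : {poly F}) : X1 %| red m a - a.
Proof. by rewrite -red_cong /red modp_id. Qed.

Lemma red_eq0 (a : {poly F}) : (red m a == 0) = (X1 %| a).
Proof. by rewrite -[a]subr0 -red_cong /red mod0p subr0. Qed.

Definition tau (a d : {poly F}) : F := \sum_(i < m) (red m a)`_i * (red m d)`_i.

Lemma tau_redl a b d : X1 %| a - b -> tau a d = tau b d.
Proof. by rewrite -red_cong => /eqP; rewrite /tau => ->. Qed.
Lemma tau_redr a b d : X1 %| a - b -> tau d a = tau d b.
Proof. by rewrite -red_cong => /eqP; rewrite /tau => ->. Qed.

Lemma tauC a d : tau a d = tau d a.
Proof. by apply: eq_bigr => i _; rewrite mulrC. Qed.

Lemma tauDl a b d : tau (a + b) d = tau a d + tau b d.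
Proof. by rewrite /tau /red modpD -big_split; apply: eq_bigr => i _; rewrite coefD mulrDl. Qed.
Lemma tauZl c a d : tau (c *: a) d = c * tau a d.
Proof. by rewrite /tau /red modpZl mulr_sumr; apply: eq_bigr => i _; rewrite coefZ mulrA. Qed.
Lemma tau0l d : tau 0 d = 0.
Proof. by rewrite /tau /red mod0p big1 // => i _; rewrite coef0 mul0r. Qed.
Lemma tauNl a d : tau (- a) d = - tau a d.
Proof. by rewrite -scaleN1r tauZl mulN1r. Qed.
Lemma tauBl a b d : tau (a - b) d = tau a d - tau b d.
Proof. by rewrite tauDl tauNl. Qed.
Lemma tau_suml n (G : 'I_n -> {poly F}) d :
  tau (\sum_(i < n) G i) d = \sum_(i < n) tau (G i) d.
Proof.
elim/big_rec2: _ => [|i y p _ <-]; first by rewrite tau0l.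
by rewrite tauDl.
Qed.
Lemma tauDr a b d : tau d (a + b) = tau d a + tau d b.
Proof. by rewrite !(tauC d) tauDl. Qed.
Lemma tauBr a b d : tau d (a - b) = tau d a - tau d b.
Proof. by rewrite !(tauC d) tauBl. Qed.
Lemma tauZr c a d : tau d (c *: a) = c * tau d a.
Proof. by rewrite !(tauC d) tauZl. Qed.
Lemma tau_sumr n (G : 'I_n -> {poly F}) d :
  tau d (\sum_(i < n) G i) = \sum_(i < n) tau d (G i).
Proof. by rewrite tauC tau_suml; apply: eq_bigr => i _; rewrite tauC. Qed.

Lemma tau_cong0 a d : X1 %| d -> tau a d = 0.
Proof.
by move=> H; rewrite (tau_redr a (b := 0)) ?subr0 // tauC tau0l.
Qed.

Lemma coef_redX a i : (i < m)%N ->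
  (red m ('X * a))`_i = if i == 0%N then (red m a)`_m.-1 else (red m a)`_i.-1.
Proof.
move=> Hi.
set a' := red m a; set c := a'`_m.-1.
have E : red m ('X * a) = red m ('X * a').
  by rewrite /red /a' /red modp_mul.
set r := 'X * a' - c%:P * X1.
have Hr : (size r <= m)%N.
  apply/leq_sizeP => j Hj.
  rewrite /r coefB coefCM coefXM /xm1 coefB coefXn coefC.
  case: (leqP j m) => Hjm.
    have -> : j = m by apply/eqP; rewrite eqn_leq Hjm Hj.
    rewrite eqxx (negbTE (lt0n_neq0 Hm)) /= subr0 mulr1.
    by rewrite subrr.
  rewrite (gtn_eqF Hjm) ifN; last by case: j Hj Hjm => // j; rewrite -lt0n; case: (m) Hm.
  rewrite (nth_default 0); last by apply: leq_trans (size_red a) _; case: j Hj Hjm.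
  by rewrite (gtn_eqF (leq_ltn_trans (leq0n m) Hjm)) /= subr0 mulr0 subr0.
have -> : red m ('X * a) = r.
  rewrite E /red; have -> : 'X * a' = c%:P * X1 + r by rewrite /r; ring.
  by rewrite modp_addl_mul_small // size_X1 ltnS.
rewrite /r coefB coefCM coefXM /xm1 coefB coefXn coefC (ltn_eqF Hi).
by case: (i == 0%N); rewrite /= ?subr0 ?mulr0 ?sub0r ?mulrN ?mulr1 ?opprK ?subr0.
Qed.

Lemma tauX a d : tau ('X * a) ('X * d) = tau a d.
Proof.
rewrite /tau; case: m Hm coef_redX => // n _ H.
rewrite big_ord_recl big_ord_recr /= !H //= addrC; congr (_ + _).
by apply: eq_bigr => i _; rewrite !H //=; case: i.
Qed.


Lemma tauXn j a d : tau ('X^j * a) ('X^j * d) = tau a d.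
Proof.
elim: j => [|j IH]; first by rewrite !expr0 !mul1r.
by rewrite exprS -!mulrA tauX IH.
Qed.

Lemma tauX_adj j a d : tau ('X^j * a) d = tau a ('X^(j * m.-1) * d).
Proof.
rewrite -(tauXn j a) mulrA -exprD.
apply: tau_redr.
have -> : (j + j * m.-1 = 0 + j * m)%N by case: (m) Hm => // n _; rewrite mulnS add0n.
have -> : d - 'X^(0 + j * m) * d = - (('X^(0 + j * m) - 'X^0) * d) by rewrite expr0; ring.
by rewrite dvdpNr; apply: dvdp_mulr; apply: X1_XX.
Qed.

Definition sg p : {poly F} := p \Po 'X^(m.-1).

Lemma tau_adj a g d : tau (a * g) d = tau a (sg g * d).
Proof.
rewrite /sg comp_polyE -{1}[g]coefK poly_def mulr_sumr tau_suml mulr_suml tau_sumr.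
apply: eq_bigr => i _.
by rewrite -scalerAr tauZl -scalerAl tauZr (mulrC a) tauX_adj -exprM mulnC.
Qed.

Lemma tauXi i w : (i < m)%N -> tau 'X^i w = (red m w)`_i.
Proof.
move=> Hi; rewrite /tau red_small ?size_polyXn //.
rewrite (bigD1 (Ordinal Hi)) //= coefXn eqxx mul1r big1 ?addr0 // => j /= Hj.
by rewrite coefXn; case: eqP => [E|]; [ case/eqP: Hj; apply: val_inj | rewrite mul0r].
Qed.

Lemma tau_nondeg w : (forall r, tau r w = 0) -> X1 %| w.
Proof.
move=> H; rewrite -red_eq0; apply/eqP/polyP => i; rewrite coef0.
case: (ltnP i m) => Hi; first by rewrite -tauXi // H.
by rewrite nth_default //; apply: leq_trans (size_red w) Hi.
Qed.

Lemma tau_zero_iff w : (forall r, tau r w = 0) <-> X1 %| w.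
Proof. by split; [apply: tau_nondeg | move=> H r; apply: tau_cong0]. Qed.

Lemma sgM a b : sg (a * b) = sg a * sg b.
Proof. exact: comp_polyM. Qed.
Lemma sgB a b : sg (a - b) = sg a - sg b.
Proof. exact: comp_polyB. Qed.

Lemma sg_X1 : X1 %| sg X1.
Proof.
rewrite /sg /xm1 comp_polyB comp_Xn_poly comp_polyC -exprM.
by have := X1_XX 0 m.-1; rewrite expr0 add0n mulnC.
Qed.

Lemma sg_cong a : X1 %| a -> X1 %| sg a.
Proof.
case/dvdpP => k ->; rewrite sgM; apply: dvdp_mull; exact: sg_X1.
Qed.

Lemma comp_cong a p q : X1 %| p - q -> X1 %| (a \Po p) - (a \Po q).
Proof.
move=> H; rewrite !comp_polyE -sumrB; apply: dvdp_big => i.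
rewrite -scalerBr -mul_polyC; apply: dvdp_mull.
by rewrite subrXX; apply: dvdp_mulr.
Qed.

Lemma sg_invol a : X1 %| sg (sg a) - a.
Proof.
rewrite /sg -comp_polyA comp_Xn_poly -exprM.
rewrite -{2}[a]comp_polyXr; apply: comp_cong.
have [E|Hm2] := eqVneq m 1%N.
  by rewrite E /= expr0 /xm1 expr1 -[1 - 'X]opprB dvdpNr dvdpp.
have -> : (m.-1 * m.-1 = 1 + (m - 2) * m)%N.
  by move: Hm Hm2; case: (m) => [|[|k]] //= _ _; rewrite subn2 /=; lia.
by rewrite -{2}['X]expr1; apply: X1_XX.
Qed.

Lemma sg_cong_inv a : X1 %| sg a -> X1 %| a.
Proof.
move=> /sg_cong H; have := dvdp_sub H (sg_invol a).
by rewrite opprB addrC subrK.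
Qed.



Lemma ann_sg g z : g %| X1 -> g != 0 ->
  (X1 %| sg g * z) <-> exists k, X1 %| z - sg (X1 %/ g) * k.
Proof.
move=> gd g0; set h := X1 %/ g; have gh : g * h = X1 by rewrite divpKC.
split => [H|[k Hk]].
  have H1 := sg_cong H; rewrite sgM in H1.
  have H2 : X1 %| g * sg z.
    have -> : g * sg z = sg (sg g) * sg z - (sg (sg g) - g) * sg z by ring.
    by apply: dvdp_sub => //; apply: dvdp_mulr; apply: sg_invol.
  move: H2; rewrite -{1}gh dvdp_mul2l // => /dvdpP [k Ek].
  exists (sg k).
  have -> : z - sg h * sg k = - (sg (sg z) - z) by rewrite Ek sgM; ring.
  by rewrite dvdpNr sg_invol.
have -> : sg g * z = sg g * (z - sg h * k) + sg (g * h) * k by rewrite sgM; ring.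
by apply: dvdp_add; [apply: dvdp_mull | rewrite gh; apply: dvdp_mulr; apply: sg_X1].
Qed.

Lemma dvdp_cong (g a b : {poly F}) : g %| X1 -> X1 %| a - b -> (g %| a) = (g %| b).
Proof.
move=> gd H; have Hg := dvdp_trans gd H.
apply/idP/idP => Ha.
  by have := dvdp_sub Ha Hg; rewrite opprB addrC subrK.
by have := dvdp_add Ha Hg; rewrite addrC subrK.
Qed.

Lemma rdivE (g a : {poly F}) : g %| X1 -> rdiv m g a = (g %| a).
Proof. by move=> gd; rewrite /rdiv /red -dvdp_mod. Qed.

Lemma conj_cong v : X1 %| cyc_conj m v - sg v.
Proof.
rewrite /cyc_conj.
have -> : red m (red m v \Po 'X^(m.-1)) - sg v =
  (red m (red m v \Po 'X^(m.-1)) - (red m v \Po 'X^(m.-1))) + sg (red m v - v).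
  by rewrite sgB /sg; ring.
by apply: dvdp_add; [apply: dvdp_red_sub | apply: sg_cong; apply: dvdp_red_sub].
Qed.

Lemma recip_sg p : X1 %| recip p - 'X^((size p).-1) * sg p.
Proof.
rewrite /recip /sg comp_polyE poly_def mulr_sumr.
rewrite [X in _ - X](reindex_inj rev_ord_inj) -sumrB; apply: dvdp_big => i /=.
rewrite -scalerAr -exprM -exprD.
have Hi := ltn_ord i.
have -> : (size p - i.+1 = (size p).-1 - i)%N by lia.
rewrite -scalerBr -mul_polyC; apply: dvdp_mull.
have E : forall n k j, (j < n -> 0 < k -> n.-1 + k.-1 * (n.-1 - j) = j + (n.-1 - j) * k)%N.
  move=> [|n] [|k] j //= Hj _.
  have [e ->] : exists e : nat, n = (j + e)%N by exists (n - j)%N; lia.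
  have -> : (j + e - j = e)%N by lia.
  rewrite mulnS -addnA; congr (_ + _)%N; rewrite mulnC; lia.
rewrite E //.
by rewrite -opprB dvdpNr; apply: X1_XX.
Qed.


Lemma coef0_div d : d %| X1 -> d`_0 != 0.
Proof.
case/dvdpP => k Ek; apply/negP => /eqP H0.
have : X1.[0] = k.[0] * d.[0] by rewrite Ek hornerM.
rewrite [d.[0]]horner_coef0 H0 mulr0 /xm1 hornerE hornerXn expr0n.
by rewrite (negbTE (lt0n_neq0 Hm)) hornerN hornerC add0r => /eqP; rewrite oppr_eq0 oner_eq0.
Qed.

Lemma recipZ (c : F) p : c != 0 -> recip (c *: p) = c *: recip p.
Proof.
move=> c0; rewrite /recip size_scale //; apply/polyP => i.
by rewrite coefZ !coef_poly; case: ifP; rewrite ?coefZ ?mulr0.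
Qed.

Lemma perp_rel g : g \is monic -> g %| X1 ->
  exists e e', X1 %| cyc_perp m g - e * sg (X1 %/ g) /\ X1 %| e' * e - 1.
Proof.
move=> gm gd; set h := X1 %/ g.
set G := gcdp (red m g) X1.
have HG : G %= g by apply: eqp_trans (gcdp_modl g X1) (dvdp_gcd_idl gd).
set h' := X1 %/ G.
have Hh : h' %= h by apply: eqp_divr.
have h'd : h' %| X1 by apply/dvdpP; exists G; rewrite /h' divpKC // dvdp_gcdr.
case/eqpP: Hh => [[c1 c2] /andP [/= c10 c20] E].
set a := c2 / c1.
have Ea : h' = a *: h by rewrite /a mulrC -scalerA -E scalerA mulVf // scale1r.
have h0 := coef0_div h'd.
set c := (h'`_0)^-1 * a.
have c0 : c != 0 by rewrite mulf_neq0 ?invr_eq0 // /a mulf_neq0 ?invr_eq0.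
have Ep : cyc_perp m g = c *: recip h.
  by rewrite /cyc_perp -/G -/h' {2}Ea recipZ ?scalerA // /a mulf_neq0 ?invr_eq0.
set n := (size h).-1.
exists (c%:P * 'X^n), (c^-1%:P * 'X^(n * m.-1)); split.
  rewrite Ep -mulrA mul_polyC -scalerBr -mul_polyC; apply: dvdp_mull.
  exact: recip_sg.
have -> : c^-1%:P * 'X^(n * m.-1) * (c%:P * 'X^n) = (c^-1 * c)%:P * 'X^(n * m.-1 + n).
  by rewrite [(_ * c)%:P]polyCM exprD; ring.
rewrite mulVf // mul1r.
have -> : (n * m.-1 + n = 0 + n * m)%N by case: (m) Hm => // k _; rewrite mulnS /=; lia.
by rewrite -(expr0 'X); apply: X1_XX.
Qed.


Lemma unit_transfer g y e e' P Q : g %| X1 -> X1 %| P - e * Q -> X1 %| e' * e - 1 ->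
  (g %| P * y) = (g %| Q * y).
Proof.
move=> gd H1 H2; apply/idP/idP => H.
  have -> : Q * y = e' * (P * y) - e' * ((P - e * Q) * y) - (e' * e - 1) * (Q * y) by ring.
  apply: dvdp_sub; [apply: dvdp_sub; [exact: dvdp_mull|] | ].
    by apply: dvdp_mull; apply: dvdp_mulr; apply: dvdp_trans gd H1.
  by apply: dvdp_mulr; apply: dvdp_trans gd H2.
have -> : P * y = (P - e * Q) * y + e * (Q * y) by ring.
by apply: dvdp_add; [apply: dvdp_mulr; apply: dvdp_trans gd H1 | exact: dvdp_mull].
Qed.

Lemma cvec_eq a b : cvec m a = cvec m b <-> X1 %| a - b.
Proof.
rewrite -red_cong; split => [H|/eqP H]; last by rewrite /cvec H.
apply/eqP/polyP => i.
case: (ltnP i m) => Hi.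
  by have := congr1 (fun v : 'rV_m => v 0 (Ordinal Hi)) H; rewrite !mxE.
by rewrite !nth_default //; apply: leq_trans (size_red _) Hi.
Qed.

Lemma cvec_surj (w : 'rV[F]_m) : exists c, w = cvec m c.
Proof.
set c := \sum_(i < m) w 0 i *: ('X^i : {poly F}).
have Ec : forall j, c`_j = if (j < m)%N then w 0 (insubd (Ordinal Hm) j) else 0.
  move=> j; rewrite /c coef_sum.
  under eq_bigr do rewrite coefZ coefXn.
  case: (ltnP j m) => Hj.
    rewrite (bigD1 (Ordinal Hj)) //= eqxx mulr1 big1 ?addr0.
      by congr (w 0 _); apply: val_inj; rewrite /= insubdK.
    move=> k /= Hk; case: eqP => [E|]; last by rewrite mulr0.
    by case/eqP: Hk; apply: val_inj.
  by rewrite big1 // => k _; case: eqP => [E|]; [move: (ltn_ord k); rewrite -E ltnNge Hj | rewrite mulr0].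
exists c; apply/rowP => i; rewrite /cvec mxE red_small.
  rewrite Ec ltn_ord; congr (w 0 _); apply: val_inj; rewrite /= insubdK //; exact: ltn_ord.
by apply/leq_sizeP => j Hj; rewrite Ec ltnNge Hj.
Qed.

Lemma symp_tau a b c d :
  symp (row_mx (cvec m a) (cvec m b)) (row_mx (cvec m c) (cvec m d)) = tau a d - tau b c.
Proof.
rewrite /symp /tau -sumrB; apply: eq_bigr => i _.
by rewrite !row_mxEl !row_mxEr !mxE.
Qed.

Lemma code_iff g1 g2 v1 c d :
  qc_code g1 (v1 * g1) 0 g2 (row_mx (cvec m c) (cvec m d)) <->
  exists r1 r2, X1 %| c - r1 * g1 /\ X1 %| d - (r1 * (v1 * g1) + r2 * g2).
Proof.
split => [[r1 [r2 /eq_row_mx [/cvec_eq E1 /cvec_eq E2]]]|[r1 [r2 [E1 E2]]]].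
  by exists r1, r2; rewrite mulr0 addr0 in E1.
by exists r1, r2; rewrite mulr0 addr0; congr row_mx; apply/cvec_eq.
Qed.

Lemma dual_iff g1 g2 v1 c d :
  (forall u, qc_code g1 (v1 * g1) 0 g2 u -> symp u (row_mx (cvec m c) (cvec m d)) = 0) <->
  (X1 %| sg g2 * c /\ X1 %| sg g1 * (d - sg v1 * c)).
Proof.
split => [H|[H1 H2] u [r1 [r2 ->]]].
  split.
    apply/tau_nondeg => r.
    have := H _ (ex_intro _ 0 (ex_intro _ r erefl)).
    rewrite symp_tau !mul0r !add0r mulr0 tau0l sub0r tau_adj => /eqP.
    by rewrite oppr_eq0 => /eqP.
  apply/tau_nondeg => r.
  have := H _ (ex_intro _ r (ex_intro _ 0 erefl)).
  rewrite symp_tau !mul0r !addr0 !tau_adj -tauBr sgM.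
  by have -> : sg g1 * d - sg v1 * sg g1 * c = sg g1 * (d - sg v1 * c) by ring.
rewrite symp_tau mulr0 addr0 tauDl !tau_adj sgM.
have -> : tau r1 (sg g1 * d) - (tau r1 (sg v1 * sg g1 * c) + tau r2 (sg g2 * c))
  = tau r1 (sg g1 * (d - sg v1 * c)) - tau r2 (sg g2 * c).
  by rewrite mulrBr tauBr mulrCA mulrA; ring.
by rewrite !tau_cong0 ?subrr.
Qed.

End Aux.

Theorem mainTheorem9 (F : finFieldType) (m : nat) (g1 g2 v1 : {poly F}) :
  (0 < m)%N ->
  g1 \is monic -> g1 %| xm1 F m ->
  g2 \is monic -> g2 %| xm1 F m ->
  symp_dual_containing (@qc_code F m g1 (v1 * g1) 0 g2) <->
  (rdiv m g2 (cyc_perp m g2 * (cyc_conj m v1 - v1)) /\ rdiv m g2 (cyc_perp m g1)).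
Proof.
move=> Hm g1m g1d g2m g2d.
have g10 := monic_neq0 g1m; have g20 := monic_neq0 g2m.
set X1 := xm1 F m in g1d g2d *.
set h1 := X1 %/ g1; set h2 := X1 %/ g2.
have gh1 : g1 * h1 = X1 by rewrite divpKC.
have gh2 : g2 * h2 = X1 by rewrite divpKC.
have [e1 [e1' [Pe1 Ue1]]] := perp_rel Hm g1m g1d.
have [e2 [e2' [Pe2 Ue2]]] := perp_rel Hm g2m g2d.
rewrite !(rdivE _ g2d).
rewrite -[cyc_perp m g1]mulr1 (unit_transfer _ g2d Pe1 Ue1) mulr1.
rewrite (dvdp_cong (b := cyc_perp m g2 * (sg m v1 - v1)) g2d); last first.
  have -> : cyc_perp m g2 * (cyc_conj m v1 - v1) - cyc_perp m g2 * (sg m v1 - v1)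
    = cyc_perp m g2 * (cyc_conj m v1 - sg m v1) by ring.
  by apply: dvdp_mull; apply: conj_cong.
rewrite (unit_transfer _ g2d Pe2 Ue2).
have D1 : symp_dual_containing (@qc_code F m g1 (v1 * g1) 0 g2) ->
    forall c d, X1 %| sg m g2 * c -> X1 %| sg m g1 * (d - sg m v1 * c) ->
    exists r1 r2, X1 %| c - r1 * g1 /\ X1 %| d - (r1 * (v1 * g1) + r2 * g2).
  move=> DC c d H1 H2; apply: (proj1 (code_iff Hm g1 g2 v1 c d)); apply: DC.
  by apply: (proj2 (dual_iff Hm g1 g2 v1 c d)).
split.
  move=> DC; split.
    have S1 : X1 %| sg m g2 * sg m h2 by rewrite -sgM gh2; apply: sg_X1.
    have S2 : X1 %| sg m g1 * (sg m v1 * sg m h2 - sg m v1 * sg m h2) by rewrite subrr mulr0 dvdp0.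
    have [r1 [r2 [E1 E2]]] := D1 DC _ _ S1 S2.
    have -> : sg m h2 * (sg m v1 - v1) = (sg m v1 * sg m h2 - (r1 * (v1 * g1) + r2 * g2))
       + r2 * g2 - v1 * (sg m h2 - r1 * g1) by ring.
    apply: dvdp_sub; last by apply: dvdp_mull; apply: dvdp_trans g2d E1.
    by apply: dvdp_add; [apply: dvdp_trans g2d E2 | apply: dvdp_mull; apply: dvdpp].
  have S1 : X1 %| sg m g2 * 0 by rewrite mulr0 dvdp0.
  have S2 : X1 %| sg m g1 * (sg m h1 - sg m v1 * 0) by rewrite mulr0 subr0 -sgM gh1; apply: sg_X1.
  have [r1 [r2 [E1 E2]]] := D1 DC _ _ S1 S2.
  rewrite sub0r dvdpNr in E1.
  have -> : sg m h1 = (sg m h1 - (r1 * (v1 * g1) + r2 * g2)) + r2 * g2 + v1 * (r1 * g1) by ring.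
  apply: dvdp_add; last by apply: dvdp_mull; apply: dvdp_trans g2d E1.
  by apply: dvdp_add; [apply: dvdp_trans g2d E2 | apply: dvdp_mull; apply: dvdpp].
move=> [A B] v Hv.
have [c Ec] := cvec_surj Hm (lsubmx v); have [d Ed] := cvec_surj Hm (rsubmx v).
move: Hv; rewrite -(hsubmxK v) Ec Ed => Hv.
move/(dual_iff Hm): Hv => [V1 V2].
apply: (proj2 (code_iff Hm g1 g2 v1 c d)).
have [k2 K2] := (ann_sg Hm c g2d g20).1 V1.
have [k1 K1] := (ann_sg Hm (d - sg m v1 * c) g1d g10).1 V2.
rewrite -/h1 -/h2 in K1 K2.
have h10 : h1 != 0 by apply/eqP => E; move: (X1_neq0 F Hm); rewrite -/X1 -gh1 E mulr0 eqxx.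
have h20 : h2 != 0 by apply/eqP => E; move: (X1_neq0 F Hm); rewrite -/X1 -gh2 E mulr0 eqxx.
have G1 : g1 %| sg m h2.
  have : X1 %| h1 * sg m h2.
    apply: (sg_cong_inv Hm); rewrite sgM.
    have -> : sg m h1 * sg m (sg m h2) = sg m h1 * h2 + sg m h1 * (sg m (sg m h2) - h2) by ring.
    apply: dvdp_add; last by apply: dvdp_mull; apply: (sg_invol Hm).
    by rewrite -/X1 -gh2 dvdp_mul2r.
  by rewrite -/X1 -gh1 mulrC dvdp_mul2l.
case/dvdpP: G1 => t Et.
exists (k2 * t), ((d - k2 * t * (v1 * g1)) %/ g2); split.
  by have -> : c - k2 * t * g1 = c - sg m h2 * k2 by rewrite Et; ring.
have Hdiv : g2 %| d - k2 * t * (v1 * g1).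
  have -> : d - k2 * t * (v1 * g1) = (d - sg m v1 * c - sg m h1 * k1)
     + sg m v1 * (c - sg m h2 * k2) + sg m h1 * k1 + sg m h2 * (sg m v1 - v1) * k2.
    by rewrite Et; ring.
  apply: dvdp_add; last by apply: dvdp_mulr.
  apply: dvdp_add; last by apply: dvdp_mulr.
  by apply: dvdp_add; [apply: dvdp_trans g2d K1 | apply: dvdp_mull; apply: dvdp_trans g2d K2].
rewrite divpK //.
have -> : d - (k2 * t * (v1 * g1) + (d - k2 * t * (v1 * g1))) = 0 by ring.
exact: dvdp0.
Qed.
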